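(* Let $n=d_z\le d=d_x$. Suppose that for every $\theta\in\Theta$: $f_\theta:\mathcal{X}\to\mathbb{R}^n$ is differentiable, surjective onto $\mathbb{R}^n$, and its Jacobian has full rank $n$ everywhere; and there exist $2n+1$ points $y^0,\dots,y^{2n}\in\mathcal{Y}$ such that the $2n\times 2n$ matrix $\tilde R_\theta=\big(\tilde g_\theta(y^1)-\tilde g_\theta(y^0),\dots,\tilde g_\theta(y^{2n})-\tilde g_\theta(y^0)\big)$ is invertible. Then for any $\theta,\theta'\in\Theta$, if $\tilde p_\theta(x\mid y)=\tilde p_{\theta'}(x\mid y)$ for all $x,y$, there exist a permutation $\sigma$ of $\{1,\dots,n\}$, nonzero scalars $a_i$ and scalars $c_i$ such that $f_{i,\theta}(x)=a_if_{\sigma(i),\theta'}(x)+c_i$ for all $i$ and all $x\in\mathcal{X}$.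
   Context: Let $\mathcal{X}\subset\mathbb{R}^{d_x}$, $\mathcal{Y}\subset\mathbb{R}^{d_y}$. A parameter set $\Theta$ indexes pairs $f_\theta=(f_{1,\theta},\dots,f_{n,\theta}):\mathcal{X}\to\mathbb{R}^{n}$ and $\tilde g_\theta:\mathcal{Y}\to\mathbb{R}^{2n}$. The augmented feature map is $\tilde f_\theta(x)=(f_{1,\theta}(x),f_{1,\theta}(x)^2,\dots,f_{n,\theta}(x),f_{n,\theta}(x)^2)\in\mathbb{R}^{2n}$, and the augmented conditional energy model is $\tilde p_\theta(x\mid y)=\exp(-\tilde f_\theta(x)^\top\tilde g_\theta(y))/\tilde Z(y;\theta)$, where $\Theta$ is such that $\tilde Z(y;\theta)=\int_{\mathcal{X}}\exp(-\tilde f_\theta(x)^\top\tilde g_\theta(y))\,dx<\infty$ for all $y$. *)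

(* Defs.v *)
(* classical reals. Vectors of R^m are modelled as nat -> R,
   only the coordinates 0..m-1 being meaningful. *)
From Stdlib Require Import Reals.
Open Scope R_scope.

Definition vec := nat -> R.

Fixpoint rsum (m : nat) (f : nat -> R) : R :=
  match m with
  | O => 0
  | S k => rsum k f + f k
  end.

Definition norm1 (m : nat) (h : vec) : R := rsum m (fun j => Rabs (h j)).

Definition in_Rm (m : nat) (v : vec) : Prop := forall j, (m <= j)%nat -> v j = 0.

Definition has_gradient (d : nat) (F : vec -> R) (x : vec) (L : vec) : Prop :=
  forall eps, eps > 0 -> exists delta, delta > 0 /\
    forall h, in_Rm d h -> norm1 d h < delta ->
      Rabs (F (fun j => x j + h j) - F x - rsum d (fun j => L j * h j))
        <= eps * norm1 d h.

Definition full_row_rank (n d : nat) (J : nat -> vec) : Prop :=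
  forall c : vec, (forall j, (j < d)%nat -> rsum n (fun i => c i * J i j) = 0) ->
    forall i, (i < n)%nat -> c i = 0.

(* m x m matrices as nat -> nat -> R (row, column). *)
Definition mat := nat -> nat -> R.

Definition mat_mul (m : nat) (A B : mat) : mat :=
  fun i k => rsum m (fun j => A i j * B j k).

Definition is_identity (m : nat) (A : mat) : Prop :=
  forall i k, (i < m)%nat -> (k < m)%nat -> A i k = if Nat.eqb i k then 1 else 0.

Definition invertible (m : nat) (A : mat) : Prop :=
  exists B : mat, is_identity m (mat_mul m A B) /\ is_identity m (mat_mul m B A).

(* Augmented feature map: (f_1, f_1^2, ..., f_n, f_n^2), 0-indexed:
   component 2i is f_i, component 2i+1 is f_i^2. *)
Definition aug (fx : vec) : vec :=
  fun k => if Nat.even k then fx (Nat.div2 k) else (fx (Nat.div2 k)) ^ 2.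

Definition Rtilde (gt : vec -> vec) (ys : nat -> vec) : mat :=
  fun r k => gt (ys (S k)) r - gt (ys O) r.

Definition ptilde (n : nat) (fx : vec) (gy : vec) (Zy : R) : R :=
  exp (- rsum (2 * n) (fun k => aug fx k * gy k)) / Zy.

Definition is_perm (n : nat) (sigma : nat -> nat) : Prop :=
  (forall i, (i < n)%nat -> (sigma i < n)%nat) /\
  (forall i j, (i < n)%nat -> (j < n)%nat -> sigma i = sigma j -> i = j).

(* Main.v *)
Require Import Defs.
From Stdlib Require Import Reals Lra Lia Psatz Arith Classical ClassicalEpsilon.
Open Scope R_scope.

Lemma quartic (A B C A' B' C': R): (forall t, (A*t + B*t^2 + C)^2 = A'*t + B'*t^2 + C') -> B = 0.
Proof. intros H. pose proof (H 0) as H0. pose proof (H 1) as H1. pose proof (H 2) as H2.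
pose proof (H 3) as H3. pose proof (H 4) as H4.
assert (B*B = 0) by nra. nra. Qed.

Lemma bilin (A B C D E F G H: R): (forall t s, (A*t + B*s + C)^2 = D*t + E*t^2 + F*s + G*s^2 + H) -> A*B = 0.
Proof. intros K. pose proof (K 0 0). pose proof (K 1 0). pose proof (K 0 1). pose proof (K 1 1).
pose proof (K (-1) 0). pose proof (K 0 (-1)). nra. Qed.

Lemma rsum_ext m f g : (forall k, (k < m)%nat -> f k = g k) -> rsum m f = rsum m g.
Proof. induction m; simpl; intros H; auto. rewrite IHm by (intros; apply H; lia). rewrite H by lia; auto. Qed.

Lemma rsum_plus m f g : rsum m (fun k => f k + g k) = rsum m f + rsum m g.
Proof. induction m; simpl; [ring|]. rewrite IHm; ring. Qed.

Lemma rsum_scal_r m f c : rsum m f * c = rsum m (fun k => f k * c).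
Proof. induction m; simpl; [ring|]. rewrite <- IHm; ring. Qed.

Lemma rsum_scal_l m f c : c * rsum m f = rsum m (fun k => c * f k).
Proof. induction m; simpl; [ring|]. rewrite <- IHm; ring. Qed.

Lemma rsum_swap m p (F : nat -> nat -> R) :
  rsum m (fun k => rsum p (fun r => F r k)) = rsum p (fun r => rsum m (fun k => F r k)).
Proof. induction m; simpl.
- induction p; simpl; [ring|]. rewrite <- IHp; ring.
- rewrite IHm. rewrite <- rsum_plus. auto. Qed.

Lemma rsum_point m j v : (j < m)%nat -> rsum m (fun k => if Nat.eqb k j then v else 0) = v.
Proof. induction m; intros Hj; [lia|]. simpl.
destruct (Nat.eq_dec j m) as [->|Hne].
- rewrite Nat.eqb_refl.
  assert (E : rsum m (fun k => if Nat.eqb k m then v else 0) = rsum m (fun _ => 0)).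
  { apply rsum_ext. intros k Hk. destruct (Nat.eqb_spec k m); [lia|auto]. }
  rewrite E. clear. assert (rsum m (fun _ => 0) = 0) as ->; [|ring].
  induction m; simpl; [ring|]. rewrite IHm; ring.
- rewrite IHm by lia. destruct (Nat.eqb_spec m j); [lia|ring]. Qed.

Lemma rsum_pairs n g : rsum (2*n) g = rsum n (fun m => g (2*m)%nat + g (S (2*m))).
Proof. induction n; [simpl; auto|].
replace (2 * S n)%nat with (S (S (2*n))) by lia. change (rsum (S (S (2*n))) g) with (rsum (2*n) g + g (2*n)%nat + g (S (2*n))). rewrite IHn.
simpl. ring. Qed.

Lemma aug_even v (m:nat) : aug v (2*m)%nat = v m.
Proof. unfold aug. rewrite Nat.even_even, Nat.div2_double. auto. Qed.

Lemma aug_odd v (m:nat) : aug v (S (2*m)) = (v m)^2.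
Proof. unfold aug. rewrite Nat.even_succ, Nat.odd_mul, Nat.odd_2.
change (false && Nat.odd m)%bool with false. cbv iota.
rewrite Nat.div2_succ_double. auto. Qed.

Lemma rsum_aug n al v : rsum (2*n) (fun s => al s * aug v s) =
  rsum n (fun m => al (2*m)%nat * v m + al (S (2*m)) * (v m)^2).
Proof. rewrite rsum_pairs. apply rsum_ext; intros. rewrite aug_even, aug_odd; auto. Qed.

Lemma rsum_z1 n j (a b : vec) t : (j < n)%nat ->
  rsum n (fun m => a m * (if Nat.eqb m j then t else 0) + b m * (if Nat.eqb m j then t else 0)^2)
  = a j * t + b j * t^2.
Proof. intros Hj. rewrite <- (rsum_point n j (a j * t + b j * t^2)) by auto.
apply rsum_ext; intros k Hk. destruct (Nat.eqb_spec k j); [subst; auto|ring]. Qed.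

Lemma rsum_z2 n j k (a b : vec) t s : (j < n)%nat -> (k < n)%nat -> j <> k ->
  rsum n (fun m => a m * (if Nat.eqb m j then t else if Nat.eqb m k then s else 0)
     + b m * (if Nat.eqb m j then t else if Nat.eqb m k then s else 0)^2)
  = a j * t + b j * t^2 + (a k * s + b k * s^2).
Proof. intros Hj Hk Hjk.
rewrite <- (rsum_point n j (a j * t + b j * t^2)) by auto.
rewrite <- (rsum_point n k (a k * s + b k * s^2)) by auto.
rewrite <- rsum_plus. apply rsum_ext; intros m Hm.
destruct (Nat.eqb_spec m j); destruct (Nat.eqb_spec m k); subst; try lia; ring. Qed.

Definition Aff (m : nat) (X : vec -> Prop) (U : vec -> vec) (F : vec -> R) : Prop :=
  exists (al : vec) (c : R), forall x, X x -> F x = rsum m (fun s => al s * U x s) + c.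

Lemma Aff_plus m X U F G : Aff m X U F -> Aff m X U G -> Aff m X U (fun x => F x + G x).
Proof. intros [a1 [c1 H1]] [a2 [c2 H2]]. exists (fun s => a1 s + a2 s), (c1 + c2).
intros x Hx. rewrite H1, H2 by auto.
replace (rsum m (fun s => (a1 s + a2 s) * U x s)) with (rsum m (fun s => a1 s * U x s + a2 s * U x s)) by (apply rsum_ext; intros; ring).
rewrite rsum_plus. ring. Qed.

Lemma Aff_scal m X U F k : Aff m X U F -> Aff m X U (fun x => F x * k).
Proof. intros [a1 [c1 H1]]. exists (fun s => a1 s * k), (c1 * k).
intros x Hx. rewrite H1 by auto. rewrite Rmult_plus_distr_r, rsum_scal_r.
f_equal. apply rsum_ext; intros; ring. Qed.

Lemma Aff_ext m X U F G : (forall x, X x -> F x = G x) -> Aff m X U F -> Aff m X U G.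
Proof. intros E [a1 [c1 H1]]. exists a1, c1. intros x Hx. rewrite <- E by auto. auto. Qed.

Lemma Aff_rsum m X U p (W : nat -> vec -> R) (b : nat -> R) :
  (forall k, (k < p)%nat -> Aff m X U (W k)) -> Aff m X U (fun x => rsum p (fun k => W k x * b k)).
Proof. induction p; intros H.
- exists (fun _ => 0), 0. intros x _. simpl. replace (rsum m (fun _ => 0 * U x _)) with (rsum m (fun _ => U x 0%nat * 0)) by (apply rsum_ext; intros; ring).
  rewrite <- rsum_scal_r. ring.
- simpl. apply Aff_plus. apply IHp; intros; apply H; lia. apply Aff_scal. apply H; lia. Qed.

Theorem mainTheorem3
  (d dy n : nat) (Hnd : (n <= d)%nat)
  (X Y : vec -> Prop)
  (HX : forall x, X x -> in_Rm d x)
  (HY : forall y, Y y -> in_Rm dy y)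
  (Theta : Type)
  (f : Theta -> vec -> vec)          (* f theta x i = f_{i,theta}(x), i < n *)
  (gt : Theta -> vec -> vec)         (* gt theta y k = g~_theta(y)_k, k < 2n *)
  (Z : Theta -> vec -> R)            (* normalising constants Z~(y; theta) *)
  (HZ : forall th y, Y y -> Z th y > 0)
  (Hdiff : forall th x, X x -> forall i, (i < n)%nat ->
             exists L, has_gradient d (fun u => f th u i) x L)
  (Hsurj : forall th (z : vec), exists x, X x /\
             forall i, (i < n)%nat -> f th x i = z i)
  (Hrank : forall th x, X x -> forall J : nat -> vec,
             (forall i, (i < n)%nat -> has_gradient d (fun u => f th u i) x (J i)) ->
             full_row_rank n d J)
  (Hvar : forall th, exists ys : nat -> vec,
             (forall k, (k <= 2 * n)%nat -> Y (ys k)) /\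
             invertible (2 * n) (Rtilde (gt th) ys))
  (th th' : Theta)
  (Heq : forall x y, X x -> Y y ->
           ptilde n (f th x) (gt th y) (Z th y) = ptilde n (f th' x) (gt th' y) (Z th' y)) :
  exists sigma : nat -> nat, is_perm n sigma /\
  exists a c : nat -> R,
    forall i, (i < n)%nat -> a i <> 0 /\
      forall x, X x -> f th x i = a i * f th' x (sigma i) + c i.
Proof.
  set (m2 := (2 * n)%nat).
  set (U := fun x => aug (f th' x)).
  destruct (Hvar th) as [ys [HYs [B [HRB HBR]]]].
  assert (S_aff : forall y, Y y -> Aff m2 X U
            (fun x => rsum m2 (fun k => aug (f th x) k * gt th y k))).
  { intros y Hy. exists (fun s => gt th' y s), (ln (Z th' y) - ln (Z th y)).
    intros x Hx. pose proof (Heq x y Hx Hy) as E. unfold ptilde in E.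
    apply (f_equal ln) in E.
    unfold Rdiv in E.
    rewrite !ln_mult, !ln_Rinv, !ln_exp in E
      by (try apply exp_pos; try apply Rinv_0_lt_compat; apply HZ; auto).
    replace (rsum m2 (fun s => gt th' y s * U x s)) with
      (rsum (2*n) (fun k => aug (f th' x) k * gt th' y k))
      by (apply rsum_ext; intros; unfold U; ring).
    unfold m2. lra. }
  assert (w_aff : forall k, (k < m2)%nat -> Aff m2 X U
            (fun x => rsum m2 (fun r => aug (f th x) r * Rtilde (gt th) ys r k))).
  { intros k Hk.
    eapply Aff_ext; [| apply Aff_plus; [apply (S_aff (ys (S k))) | apply Aff_scal with (k := -1); apply (S_aff (ys O))]].
    - intros x Hx. cbv beta. rewrite rsum_scal_r, <- rsum_plus.
      apply rsum_ext; intros; unfold Rtilde; ring.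
    - apply HYs; unfold m2 in Hk; lia.
    - apply HYs; lia. }
  assert (u_aff : forall r, (r < m2)%nat -> Aff m2 X U (fun x => aug (f th x) r)).
  { intros r Hr.
    eapply Aff_ext; [| apply (Aff_rsum m2 X U m2 (fun k x => rsum m2 (fun r0 => aug (f th x) r0 * Rtilde (gt th) ys r0 k)) (fun k => B k r)); exact w_aff].
    intros x Hx. cbv beta.
    set (u := aug (f th x)). set (Rt := Rtilde (gt th) ys).
    transitivity (rsum m2 (fun k => rsum m2 (fun r0 => u r0 * Rt r0 k * B k r))).
    { apply rsum_ext; intros. apply rsum_scal_r. }
    rewrite rsum_swap.
    transitivity (rsum m2 (fun r0 => u r0 * mat_mul m2 Rt B r0 r)).
    { apply rsum_ext; intros. unfold mat_mul. rewrite rsum_scal_l.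
      apply rsum_ext; intros; ring. }
    transitivity (rsum m2 (fun r0 => if Nat.eqb r0 r then u r else 0)).
    { apply rsum_ext; intros r0 Hr0. rewrite HRB by auto.
      destruct (Nat.eqb_spec r0 r); subst; ring. }
    rewrite rsum_point; auto. }
  assert (per_i : forall i, (i < n)%nat -> exists (m : nat) (a c : R),
     (m < n)%nat /\ a <> 0 /\ forall x, X x -> f th x i = a * f th' x m + c).
  { intros i Hi.
    destruct (u_aff (2*i)%nat) as [al1 [c1 H1]]; [unfold m2; lia|].
    destruct (u_aff (S (2*i))) as [al2 [c2 H2]]; [unfold m2; lia|].
    set (a := fun m => al1 (2*m)%nat). set (b := fun m => al1 (S (2*m))).
    set (a' := fun m => al2 (2*m)%nat). set (b' := fun m => al2 (S (2*m))).
    assert (Rep : forall x, X x -> f th x i =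
       rsum n (fun m => a m * f th' x m + b m * (f th' x m)^2) + c1).
    { intros x Hx. rewrite <- (aug_even (f th x) i), H1 by auto. unfold m2, U.
      rewrite rsum_aug. auto. }
    assert (Poly : forall z : vec,
       (rsum n (fun m => a m * z m + b m * (z m)^2) + c1)^2 =
       rsum n (fun m => a' m * z m + b' m * (z m)^2) + c2).
    { intros z. destruct (Hsurj th' z) as [x [Hx Hz]].
      pose proof (H2 x Hx) as E2. rewrite aug_odd in E2. rewrite Rep in E2 by auto.
      unfold m2, U in E2. rewrite rsum_aug in E2.
      replace (rsum n (fun m => a m * z m + b m * z m ^ 2)) with
        (rsum n (fun m => a m * f th' x m + b m * f th' x m ^ 2))
        by (apply rsum_ext; intros; rewrite Hz; auto).
      replace (rsum n (fun m => a' m * z m + b' m * z m ^ 2)) with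
        (rsum n (fun m => al2 (2 * m)%nat * f th' x m + al2 (S (2 * m)) * f th' x m ^ 2))
        by (apply rsum_ext; intros; rewrite Hz; auto).
      exact E2. }
    assert (Hb : forall j, (j < n)%nat -> b j = 0).
    { intros j Hj. apply (quartic (a j) (b j) c1 (a' j) (b' j) c2).
      intros t. pose proof (Poly (fun m => if Nat.eqb m j then t else 0)) as P.
      cbv beta in P. rewrite !rsum_z1 in P by auto. exact P. }
    assert (Hab : forall j k, (j < n)%nat -> (k < n)%nat -> j <> k -> a j * a k = 0).
    { intros j k Hj Hk Hjk.
      apply (bilin (a j) (a k) c1 (a' j) (b' j) (a' k) (b' k) c2).
      intros t s. pose proof (Poly (fun m => if Nat.eqb m j then t else if Nat.eqb m k then s else 0)) as P.
      cbv beta in P. rewrite !rsum_z2 in P by auto. rewrite (Hb j Hj), (Hb k Hk) in P.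
      etransitivity; [|etransitivity; [exact P|ring]]. ring. }
    destruct (classic (exists m, (m < n)%nat /\ a m <> 0)) as [[m [Hm Ham]] | Hno].
    - exists m, (a m), c1. split; [auto|split; [auto|]].
      intros x Hx. rewrite Rep by auto.
      rewrite (rsum_ext n _ (fun k => if Nat.eqb k m then a m * f th' x m else 0)).
      + rewrite rsum_point; auto.
      + intros k Hk. destruct (Nat.eqb_spec k m).
        * subst. rewrite (Hb m Hk). ring.
        * assert (a k = 0).
          { pose proof (Hab k m Hk Hm n0) as P. destruct (Rmult_integral _ _ P); auto; contradiction. }
          rewrite H, (Hb k Hk). ring.
    - exfalso. destruct (Hsurj th (fun _ => c1 + 1)) as [x [Hx Hz]].
      pose proof (Rep x Hx) as E. rewrite Hz in E by auto.
      rewrite (rsum_ext n _ (fun _ => 0 * 0)) in E.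
      + rewrite <- rsum_scal_r in E. lra.
      + intros k Hk. rewrite (Hb k Hk).
        assert (a k = 0) as ->.
        { destruct (Req_dec (a k) 0); auto. exfalso; apply Hno; eauto. }
        ring. }
  assert (H' : forall i, exists p : nat * R * R, (i < n)%nat ->
     (fst (fst p) < n)%nat /\ snd (fst p) <> 0 /\
     forall x, X x -> f th x i = snd (fst p) * f th' x (fst (fst p)) + snd p).
  { intros i. destruct (Nat.lt_ge_cases i n) as [Hi|Hi].
    - destruct (per_i i Hi) as [m [a [c [? [? ?]]]]]. exists (m, a, c). auto.
    - exists (O, 0, 0). intros; lia. }
  set (P := fun i => proj1_sig (constructive_indefinite_description _ (H' i))).
  assert (HP : forall i, (i < n)%nat ->
     (fst (fst (P i)) < n)%nat /\ snd (fst (P i)) <> 0 /\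
     forall x, X x -> f th x i = snd (fst (P i)) * f th' x (fst (fst (P i))) + snd (P i)).
  { intros i. exact (proj2_sig (constructive_indefinite_description _ (H' i))). }
  exists (fun i => fst (fst (P i))). split.
  - split.
    + intros i Hi. apply HP; auto.
    + intros i j Hi Hj Hs. destruct (Nat.eq_dec i j) as [|Hne]; auto. exfalso.
      destruct (HP i Hi) as [_ [Hai Hfi]]. destruct (HP j Hj) as [_ [Haj Hfj]].
      destruct (Hsurj th (fun m => if Nat.eqb m i then snd (P i) else snd (P j) + 1)) as [x [Hx Hz]].
      pose proof (Hz i Hi) as Ei. pose proof (Hz j Hj) as Ej.
      rewrite Nat.eqb_refl in Ei.
      destruct (Nat.eqb_spec j i); [congruence|].
      rewrite Hfi in Ei by auto. rewrite Hfj in Ej by auto. rewrite <- Hs in Ej.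
      assert (snd (fst (P i)) * f th' x (fst (fst (P i))) = 0) as Z0 by lra.
      destruct (Rmult_integral _ _ Z0) as [|Z1]; [contradiction|].
      rewrite Z1 in Ej. lra.
  - exists (fun i => snd (fst (P i))), (fun i => snd (P i)).
    intros i Hi. destruct (HP i Hi) as [_ [? ?]]. auto.
Qed.
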